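(* (i) If $N=2$, the infeasible SINR region $\Upsilon^c=\mathbb R_+^2\setminus\Upsilon$ is convex; explicitly, $\Upsilon=\{(\mu_1,\mu_2)\in\mathbb R_+^2:\mu_1\mu_2<\frac{g_{r_1^{k_1^*},t_1}}{g_{r_1^{k_1^*},t_2}}\cdot\frac{g_{r_2^{k_2^*},t_2}}{g_{r_2^{k_2^*},t_1}}\}$ where $k_i^*\in\arg\max_{k\in\mathcal K_i}g_{r_i^{k},t_j}/g_{r_i^{k},t_i}$ ($j\neq i$), assuming all cross gains are positive. (ii) For $N\geq 3$ this need not hold: for the system with $N=3$, $K_1=K_2=K_3=2$ and gains $(g_{r,t_1},g_{r,t_2},g_{r,t_3})$ equal to $(1,0.5,0.1)$ for $R_1^1$, $(1,0.1,0.5)$ for $R_1^2$, $(0.5,1,0.1)$ for $R_2^1$, $(0.1,1,0.5)$ for $R_2^2$, $(0.5,0.1,1)$ for $R_3^1$, $(0.1,0.5,1)$ for $R_3^2$, the set $\Upsilon^c$ is not convex.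
   Context: Multicast system: $N$ transmitters $T_1,\dots,T_N$; transmitter $T_i$ has $K_i\geq1$ receivers $R_i^{k}$, $k\in\mathcal K_i=\{1,\dots,K_i\}$. Channel gains $g_{r_i^{k},t_j}\geq 0$ (from $T_j$ to $R_i^k$) with $g_{r_i^{k},t_i}>0$; noise variance $\sigma^2>0$. For $\mathbf p\geq\mathbf 0$: $\gamma_i^{k}(\mathbf p)=\frac{g_{r_i^{k},t_i}p_i}{\sum_{j\neq i}g_{r_i^{k},t_j}p_j+\sigma^2}$, $\gamma_i(\mathbf p)=\min_{k\in\mathcal K_i}\gamma_i^k(\mathbf p)$, $\Gamma(\mathbf p)=(\gamma_1(\mathbf p),\dots,\gamma_N(\mathbf p))$. The feasible SINR region (no power constraint) is $\Upsilon=\{\Gamma(\mathbf p):\mathbf p\in\mathbb R^N,\mathbf p\geq\mathbf 0\}\subseteq\mathbb R_+^N$, and $\Upsilon^c=\mathbb R_+^N\setminus\Upsilon$ is the infeasible SINR region. *)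

(* Defs.v *)
From Stdlib Require Import Reals Lra Lia.
Open Scope R_scope.

(* Indexing conventions (0-based):
   transmitters/receiver groups i = 0..N-1, receivers k = 0..K i - 1,
   g i k j = g_{r_i^{k+1}, t_{j+1}} (gain from T_{j+1} to R_{i+1}^{k+1}).
   Power vectors and SINR vectors are functions nat -> R; only entries < N matter. *)

Fixpoint sum_lt (n : nat) (f : nat -> R) : R :=
  match n with
  | O => 0
  | S m => sum_lt m f + f m
  end.

Fixpoint min_upto (n : nat) (f : nat -> R) : R :=
  match n with
  | O => f O
  | S m => Rmin (min_upto m f) (f (S m))
  end.

Definition sinr_k (N : nat) (g : nat -> nat -> nat -> R) (sigma2 : R)
  (p : nat -> R) (i k : nat) : R :=
  g i k i * p i /
  (sum_lt N (fun j => if Nat.eqb j i then 0 else g i k j * p j) + sigma2).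

(* gamma_i(p) = min_{k in K_i} gamma_i^k(p)  (K i >= 1) *)
Definition sinr (N : nat) (K : nat -> nat) (g : nat -> nat -> nat -> R)
  (sigma2 : R) (p : nat -> R) (i : nat) : R :=
  min_upto (K i - 1) (fun k => sinr_k N g sigma2 p i k).

Definition valid_system (N : nat) (K : nat -> nat) (g : nat -> nat -> nat -> R)
  (sigma2 : R) : Prop :=
  0 < sigma2 /\
  (forall i, (i < N)%nat -> (1 <= K i)%nat) /\
  (forall i k j, (i < N)%nat -> (k < K i)%nat -> (j < N)%nat -> 0 <= g i k j) /\
  (forall i k, (i < N)%nat -> (k < K i)%nat -> 0 < g i k i).

Definition nonneg_vec (N : nat) (v : nat -> R) : Prop :=
  forall i, (i < N)%nat -> 0 <= v i.

Definition feasible (N : nat) (K : nat -> nat) (g : nat -> nat -> nat -> R)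
  (sigma2 : R) (mu : nat -> R) : Prop :=
  exists p : nat -> R, nonneg_vec N p /\
    forall i, (i < N)%nat -> mu i = sinr N K g sigma2 p i.

Definition infeasible (N : nat) (K : nat -> nat) (g : nat -> nat -> nat -> R)
  (sigma2 : R) (mu : nat -> R) : Prop :=
  nonneg_vec N mu /\ ~ feasible N K g sigma2 mu.

Definition convex_set (N : nat) (S : (nat -> R) -> Prop) : Prop :=
  forall (x y : nat -> R) (t : R), S x -> S y -> 0 <= t <= 1 ->
    forall z : nat -> R,
      (forall i, (i < N)%nat -> z i = t * x i + (1 - t) * y i) -> S z.

Definition K_ex (i : nat) : nat := 2.

Definition g_ex (i k j : nat) : R :=
  match i, k, j return R with
  | 0%nat,0%nat,0%nat => 1 | 0%nat,0%nat,1%nat => /2 | 0%nat,0%nat,2%nat => /10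
  | 0%nat,1%nat,0%nat => 1 | 0%nat,1%nat,1%nat => /10 | 0%nat,1%nat,2%nat => /2
  | 1%nat,0%nat,0%nat => /2 | 1%nat,0%nat,1%nat => 1 | 1%nat,0%nat,2%nat => /10
  | 1%nat,1%nat,0%nat => /10 | 1%nat,1%nat,1%nat => 1 | 1%nat,1%nat,2%nat => /2
  | 2%nat,0%nat,0%nat => /2 | 2%nat,0%nat,1%nat => /10 | 2%nat,0%nat,2%nat => 1
  | 2%nat,1%nat,0%nat => /10 | 2%nat,1%nat,1%nat => /2 | 2%nat,1%nat,2%nat => 1
  | _, _, _ => 0
  end.

(* Main.v *)
Require Import Defs.
From Stdlib Require Import Reals Lra Lia Psatz Ranalysis5.
Open Scope R_scope.

Lemma min_upto_le n f k : (k <= n)%nat -> min_upto n f <= f k.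
Proof.
  induction n as [|n IH]; intro Hk; simpl.
  - replace k with 0%nat by lia; lra.
  - destruct (Nat.eq_dec k (S n)) as [->|Hne].
    + apply Rmin_r.
    + eapply Rle_trans; [apply Rmin_l| apply IH; lia].
Qed.

Lemma min_upto_attain n f : exists k, (k <= n)%nat /\ min_upto n f = f k.
Proof.
  induction n as [|n IH]; simpl.
  - exists 0%nat; split; [lia|reflexivity].
  - destruct IH as [k [Hk E]]. unfold Rmin. destruct (Rle_dec (min_upto n f) (f (S n))).
    + exists k; split; [lia|exact E].
    + exists (S n); split; [lia|reflexivity].
Qed.

Lemma min_upto_ext n f h : (forall k, (k <= n)%nat -> f k = h k) -> min_upto n f = min_upto n h.
Proof.
  induction n as [|n IH]; intro H; simpl.
  - apply H; lia.
  - rewrite IH by (intros; apply H; lia). rewrite H by lia. reflexivity.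
Qed.

Lemma min_upto_scale n f x : 0 <= x -> min_upto n (fun k => x * f k) = x * min_upto n f.
Proof.
  intro Hx; induction n as [|m IH]; simpl; [reflexivity|].
  rewrite IH. unfold Rmin.
  destruct (Rle_dec (min_upto m f) (f (S m))) as [h1|h1];
  destruct (Rle_dec (x * min_upto m f) (x * f (S m))) as [h2|h2]; try reflexivity.
  - exfalso. apply h2. apply Rmult_le_compat_l; assumption.
  - destruct Hx as [Hx|Hx].
    + exfalso; apply h1. apply Rmult_le_reg_l with x; lra.
    + subst; ring.
Qed.

Lemma argmax_upto n (f : nat -> R) : exists k, (k<=n)%nat /\ forall j, (j<=n)%nat -> f j <= f k.
Proof.
  induction n as [|n IH].
  - exists 0%nat; split; [lia|]. intros j Hj; replace j with 0%nat by lia; lra.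
  - destruct IH as [k [Hk H]]. destruct (Rle_dec (f k) (f (S n))).
    + exists (S n); split; [lia|]. intros j Hj. destruct (Nat.eq_dec j (S n)) as [->|]; [lra|].
      eapply Rle_trans; [apply H; lia| lra].
    + exists k; split; [lia|]. intros j Hj. destruct (Nat.eq_dec j (S n)) as [->|]; [lra|].
      apply H; lia.
Qed.

Lemma cp_const c x : continuity_pt (fun _ => c) x.
Proof. apply continuity_pt_const. intros a b; reflexivity. Qed.
Lemma cp_id x : continuity_pt (fun y => y) x.
Proof. exact (derivable_continuous_pt _ _ (derivable_pt_id x)). Qed.
Lemma cp_mult f h x : continuity_pt f x -> continuity_pt h x -> continuity_pt (fun y => f y * h y) x.
Proof. intros; exact (continuity_pt_mult f h x H H0). Qed.
Lemma cp_plus f h x : continuity_pt f x -> continuity_pt h x -> continuity_pt (fun y => f y + h y) x.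
Proof. intros; exact (continuity_pt_plus f h x H H0). Qed.
Lemma cp_minus f h x : continuity_pt f x -> continuity_pt h x -> continuity_pt (fun y => f y - h y) x.
Proof. intros; exact (continuity_pt_minus f h x H H0). Qed.
Lemma cp_div f h x : continuity_pt f x -> continuity_pt h x -> h x <> 0 -> continuity_pt (fun y => f y / h y) x.
Proof. intros; exact (continuity_pt_div f h x H H0 H1). Qed.
Lemma cp_comp f h x : continuity_pt f x -> continuity_pt h (f x) -> continuity_pt (fun y => h (f y)) x.
Proof. intros; exact (continuity_pt_comp f h x H H0). Qed.

Lemma cont_Rmin (f h : R -> R) x : continuity_pt f x -> continuity_pt h x ->
  continuity_pt (fun y => Rmin (f y) (h y)) x.
Proof.
  intros Hf Hh.
  apply continuity_pt_locally_ext with (a:=1) (f := fun y => / 2 * ((f y + h y) - Rabs (f y - h y))).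
  - lra.
  - intros y _. unfold Rmin. destruct (Rle_dec (f y) (h y)).
    + rewrite Rabs_left1 by lra. field.
    + rewrite Rabs_right by lra. field.
  - apply cp_mult; [apply cp_const|]. apply cp_minus; [apply cp_plus; auto|].
    apply (cp_comp (fun y => f y - h y) Rabs). apply cp_minus; auto. apply Rcontinuity_abs.
Qed.

Lemma cont_min_upto n (F : R -> nat -> R) x :
  (forall k, (k <= n)%nat -> continuity_pt (fun y => F y k) x) ->
  continuity_pt (fun y => min_upto n (F y)) x.
Proof.
  induction n as [|n IH]; intro H; simpl.
  - apply H; lia.
  - apply (cont_Rmin (fun y => min_upto n (F y)) (fun y => F y (S n))).
    + apply IH; intros; apply H; lia.
    + apply H; lia.
Qed.

Lemma hyper_convex x0 x1 y0 y1 r t : 0 <= x0 -> 0 <= x1 -> 0 <= y0 -> 0 <= y1 -> 0 <= r ->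
  1 <= x0 * x1 * r -> 1 <= y0 * y1 * r -> 0 <= t <= 1 ->
  1 <= (t * x0 + (1 - t) * y0) * (t * x1 + (1 - t) * y1) * r.
Proof.
  intros. set (u := r * (x0 * y1 + y0 * x1)).
  assert (Hu0 : 0 <= u) by (unfold u; apply Rmult_le_pos; nra).
  assert (Hu2 : 4 <= u * u).
  { assert (u * u - 4 * ((x0*x1*r) * (y0*y1*r)) = (r * (x0*y1 - y0*x1))^2) by (unfold u; ring).
    assert (0 <= (r * (x0*y1 - y0*x1))^2) by apply pow2_ge_0.
    assert (1 <= (x0*x1*r) * (y0*y1*r)) by nra. nra. }
  assert (Hu : 2 <= u) by nra.
  assert (E : (t * x0 + (1 - t) * y0) * (t * x1 + (1 - t) * y1) * r =
     t*t*(x0*x1*r) + (1-t)*(1-t)*(y0*y1*r) + t*(1-t)*u) by (unfold u; ring).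
  rewrite E.
  assert (t*t*(x0*x1*r) >= t*t*1) by (apply Rle_ge, Rmult_le_compat_l; nra).
  assert ((1-t)*(1-t)*(y0*y1*r) >= (1-t)*(1-t)*1) by (apply Rle_ge, Rmult_le_compat_l; nra).
  assert (t*(1-t)*u >= t*(1-t)*2) by (apply Rle_ge, Rmult_le_compat_l; nra).
  nra.
Qed.

Lemma prod_lt4 s mu0 mu1 p0 p1 D0 D1 : 0 <= p0 -> 0 <= p1 -> 0 < s ->
  /2 * p1 + s <= D0 -> /2 * p0 + s <= D1 -> 0 <= mu0 -> mu0 <= p0 / D0 ->
  0 <= mu1 -> mu1 <= p1 / D1 -> mu0 * mu1 < 4.
Proof.
  intros. assert (0 < D0) by lra. assert (0 < D1) by lra.
  assert (mu0 * mu1 <= p0 / D0 * (p1 / D1)) by (apply Rmult_le_compat; lra).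
  assert (E : p0 / D0 * (p1 / D1) * (D0 * D1) = p0 * p1) by (field; lra).
  assert (p0 * p1 < 4 * (D0 * D1)) by nra.
  assert (p0 / D0 * (p1 / D1) < 4).
  { apply Rmult_lt_reg_r with (D0 * D1); [nra|]. rewrite E. lra. }
  lra.
Qed.

Lemma part2 : forall sigma2 : R, 0 < sigma2 ->
     ~ convex_set 3 (infeasible 3 K_ex g_ex sigma2).
Proof.
  intros s Hs Hc.
  set (x := fun i : nat => match i with 0%nat => 20/37 | 1%nat => 10 | _ => 0 end).
  set (y := fun i : nat => match i with 0%nat => 0 | 1%nat => 10 | _ => 20/37 end).
  set (z := fun i : nat => match i with 0%nat => 10/37 | 1%nat => 10 | _ => 10/37 end).
  assert (Hx : infeasible 3 K_ex g_ex s x).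
  { split.
    - intros i Hi. destruct i as [|[|[|]]]; simpl; lra.
    - intros [p [Hp Hq]].
      pose proof (Hq 0%nat ltac:(lia)) as H0. pose proof (Hq 1%nat ltac:(lia)) as H1.
      pose proof (Hp 0%nat ltac:(lia)). pose proof (Hp 1%nat ltac:(lia)). pose proof (Hp 2%nat ltac:(lia)).
      unfold sinr, sinr_k, K_ex in H0, H1; cbn [min_upto sum_lt Nat.eqb Nat.sub g_ex x] in H0, H1.
      pose proof (Rmin_l (1 * p 0%nat / (0 + 0 + / 2 * p 1%nat + / 10 * p 2%nat + s))
    (1 * p 0%nat / (0 + 0 + / 10 * p 1%nat + / 2 * p 2%nat + s))) as L0.
      pose proof (Rmin_l (1 * p 1%nat / (0 + / 2 * p 0%nat + 0 + / 10 * p 2%nat + s))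
   (1 * p 1%nat / (0 + / 10 * p 0%nat + 0 + / 2 * p 2%nat + s))) as L1.
      rewrite <- H0 in L0. rewrite <- H1 in L1. rewrite Rmult_1_l in L0, L1.
      assert (20/37 * 10 < 4).
      { eapply prod_lt4 with (s := s) (p0 := p 0%nat) (p1 := p 1%nat); try eassumption; lra. }
      lra. }
  assert (Hy : infeasible 3 K_ex g_ex s y).
  { split.
    - intros i Hi. destruct i as [|[|[|]]]; simpl; lra.
    - intros [p [Hp Hq]].
      pose proof (Hq 1%nat ltac:(lia)) as H0. pose proof (Hq 2%nat ltac:(lia)) as H1.
      pose proof (Hp 0%nat ltac:(lia)). pose proof (Hp 1%nat ltac:(lia)). pose proof (Hp 2%nat ltac:(lia)).
      unfold sinr, sinr_k, K_ex in H0, H1; cbn [min_upto sum_lt Nat.eqb Nat.sub g_ex y] in H0, H1.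
      pose proof (Rmin_r (1 * p 1%nat / (0 + / 2 * p 0%nat + 0 + / 10 * p 2%nat + s))
   (1 * p 1%nat / (0 + / 10 * p 0%nat + 0 + / 2 * p 2%nat + s))) as L0.
      pose proof (Rmin_r (1 * p 2%nat / (0 + / 2 * p 0%nat + / 10 * p 1%nat + 0 + s))
   (1 * p 2%nat / (0 + / 10 * p 0%nat + / 2 * p 1%nat + 0 + s))) as L1.
      rewrite <- H0 in L0. rewrite <- H1 in L1. rewrite Rmult_1_l in L0, L1.
      assert (10 * (20/37) < 4).
      { eapply prod_lt4 with (s := s) (p0 := p 1%nat) (p1 := p 2%nat); try eassumption; lra. }
      lra. }
  assert (Hz : infeasible 3 K_ex g_ex s z).
  { apply (Hc x y (1/2) Hx Hy ltac:(lra) z).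
    intros i Hi. destruct i as [|[|[|]]]; simpl; lra. }
  apply (proj2 Hz).
  exists (fun i => s * match i with 0%nat => 10 | 1%nat => 70 | _ => 10 end).
  split.
  - intros i Hi. destruct i as [|[|[|]]]; simpl; nra.
  - intros i Hi. destruct i as [|[|[|]]]; try lia;
    unfold sinr, sinr_k, K_ex; cbn [min_upto sum_lt Nat.eqb Nat.sub g_ex z].
    + replace (1 * (s * 10) / (0 + 0 + / 2 * (s * 70) + / 10 * (s * 10) + s)) with (10/37) by (field; lra).
      replace (1 * (s * 10) / (0 + 0 + / 10 * (s * 70) + / 2 * (s * 10) + s)) with (10/13) by (field; lra).
      rewrite Rmin_left; lra.
    + replace (1 * (s * 70) / (0 + / 2 * (s * 10) + 0 + / 10 * (s * 10) + s)) with 10 by (field; lra).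
      replace (1 * (s * 70) / (0 + / 10 * (s * 10) + 0 + / 2 * (s * 10) + s)) with 10 by (field; lra).
      rewrite Rmin_left; lra.
    + replace (1 * (s * 10) / (0 + / 2 * (s * 10) + / 10 * (s * 70) + 0 + s)) with (10/13) by (field; lra).
      replace (1 * (s * 10) / (0 + / 10 * (s * 10) + / 2 * (s * 70) + 0 + s)) with (10/37) by (field; lra).
      rewrite Rmin_right; lra.
Qed.

Lemma sinr0_eq K g s p : sinr 2 K g s p 0 =
  min_upto (K 0%nat - 1) (fun k => g 0%nat k 0%nat * p 0%nat / (g 0%nat k 1%nat * p 1%nat + s)).
Proof. unfold sinr. apply min_upto_ext. intros. unfold sinr_k. simpl. f_equal. ring. Qed.

Lemma sinr1_eq K g s p : sinr 2 K g s p 1 =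
  min_upto (K 1%nat - 1) (fun k => g 1%nat k 1%nat * p 1%nat / (g 1%nat k 0%nat * p 0%nat + s)).
Proof. unfold sinr. apply min_upto_ext. intros. unfold sinr_k. simpl. f_equal. ring. Qed.

Lemma Rdiv_le_0_compat a b : 0 <= a -> 0 < b -> 0 <= a / b.
Proof. intros. unfold Rdiv. apply Rmult_le_pos; [auto| left; apply Rinv_0_lt_compat; auto]. Qed.

Definition Af K g s (x : R) := min_upto (K 0%nat - 1) (fun l => g 0%nat l 0%nat / (g 0%nat l 1%nat * x + s)).
Definition Bf K g s (y : R) := min_upto (K 1%nat - 1) (fun k => g 1%nat k 1%nat / (g 1%nat k 0%nat * y + s)).

Section Two.
Variables (K : nat -> nat) (g : nat -> nat -> nat -> R) (s : R).
Hypothesis HV : valid_system 2 K g s.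

Lemma hs : 0 < s. Proof. apply HV. Qed.
Lemma hK i : (i < 2)%nat -> (1 <= K i)%nat. Proof. apply HV. Qed.
Lemma hg i k j : (i < 2)%nat -> (k <= K i - 1)%nat -> (j < 2)%nat -> 0 <= g i k j.
Proof. intros. pose proof (hK i H). apply HV; lia. Qed.
Lemma hgd i k : (i < 2)%nat -> (k <= K i - 1)%nat -> 0 < g i k i.
Proof. intros. pose proof (hK i H). apply HV; lia. Qed.

Lemma Af_pos x : 0 <= x -> 0 < Af K g s x.
Proof.
  intro Hx. unfold Af. destruct (min_upto_attain (K 0%nat - 1) (fun l => g 0%nat l 0%nat / (g 0%nat l 1%nat * x + s))) as [k [Hk E]].
  rewrite E. pose proof (hgd 0 k ltac:(lia) Hk). pose proof (hg 0 k 1 ltac:(lia) Hk ltac:(lia)). pose proof hs.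
  apply Rdiv_lt_0_compat; nra.
Qed.

Lemma Bf_pos y : 0 <= y -> 0 < Bf K g s y.
Proof.
  intro Hx. unfold Bf. destruct (min_upto_attain (K 1%nat - 1) (fun l => g 1%nat l 1%nat / (g 1%nat l 0%nat * y + s))) as [k [Hk E]].
  rewrite E. pose proof (hgd 1 k ltac:(lia) Hk). pose proof (hg 1 k 0 ltac:(lia) Hk ltac:(lia)). pose proof hs.
  apply Rdiv_lt_0_compat; nra.
Qed.

Lemma Af_cont x : 0 <= x -> continuity_pt (Af K g s) x.
Proof.
  intro Hx. unfold Af. apply (cont_min_upto _ (fun y l => g 0%nat l 0%nat / (g 0%nat l 1%nat * y + s))).
  intros k Hk. apply cp_div; [apply cp_const|apply cp_plus; [apply cp_mult; [apply cp_const|apply cp_id]|apply cp_const]|].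
  pose proof (hg 0 k 1 ltac:(lia) Hk ltac:(lia)). pose proof hs. nra.
Qed.

Lemma Bf_cont x : 0 <= x -> continuity_pt (Bf K g s) x.
Proof.
  intro Hx. unfold Bf. apply (cont_min_upto _ (fun y l => g 1%nat l 1%nat / (g 1%nat l 0%nat * y + s))).
  intros k Hk. apply cp_div; [apply cp_const|apply cp_plus; [apply cp_mult; [apply cp_const|apply cp_id]|apply cp_const]|].
  pose proof (hg 1 k 0 ltac:(lia) Hk ltac:(lia)). pose proof hs. nra.
Qed.


Lemma root_ex k1 k2 mu0 mu1 :
  (k1 < K 0%nat)%nat ->
  (forall k, (k < K 0%nat)%nat -> g 0%nat k 1%nat / g 0%nat k 0%nat <= g 0%nat k1 1%nat / g 0%nat k1 0%nat) ->
  (k2 < K 1%nat)%nat ->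
  (forall k, (k < K 1%nat)%nat -> g 1%nat k 0%nat / g 1%nat k 1%nat <= g 1%nat k2 0%nat / g 1%nat k2 1%nat) ->
  0 <= mu0 -> 0 <= mu1 ->
  mu0 * mu1 * (g 0%nat k1 1%nat / g 0%nat k1 0%nat) * (g 1%nat k2 0%nat / g 1%nat k2 1%nat) < 1 ->
  exists x, 0 <= x /\ x * Bf K g s (mu0 / Af K g s x) = mu1.
Proof.
  intros Hk1 Hr1 Hk2 Hr2 Hm0 Hm1 Hsp.
  pose proof hs as Hs.
  pose proof (hK 0 ltac:(lia)) as HK0. pose proof (hK 1 ltac:(lia)) as HK1.
  destruct (Req_dec mu1 0) as [E|Hne].
  { exists 0; split; [lra|]. rewrite E; ring. }
  assert (Hmu1 : 0 < mu1) by lra.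
  set (r1 := g 0%nat k1 1%nat / g 0%nat k1 0%nat) in *.
  set (r2 := g 1%nat k2 0%nat / g 1%nat k2 1%nat) in *.
  assert (Hr1p : 0 <= r1).
  { unfold r1. apply Rdiv_le_0_compat; [apply (hg 0 k1 1); lia| apply (hgd 0 k1); lia]. }
  assert (Hr2p : 0 <= r2).
  { unfold r2. apply Rdiv_le_0_compat; [apply (hg 1 k2 0); lia| apply (hgd 1 k2); lia]. }
  clearbody r1 r2.
  set (m0 := min_upto (K 0%nat - 1) (fun l => g 0%nat l 0%nat)).
  set (m1 := min_upto (K 1%nat - 1) (fun l => g 1%nat l 1%nat)).
  assert (Hm0p : 0 < m0).
  { unfold m0. destruct (min_upto_attain (K 0%nat - 1) (fun l => g 0%nat l 0%nat)) as [k [Hk E]].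
    rewrite E. apply (hgd 0 k); lia. }
  assert (Hm1p : 0 < m1).
  { unfold m1. destruct (min_upto_attain (K 1%nat - 1) (fun l => g 1%nat l 1%nat)) as [k [Hk E]].
    rewrite E. apply (hgd 1 k); lia. }
  set (sp := mu0 * mu1 * r1 * r2) in *.
  assert (Hsp0 : 0 <= sp).
  { unfold sp. apply Rmult_le_pos; [apply Rmult_le_pos; [apply Rmult_le_pos|]|]; lra. }
  set (C := mu1 * mu0 * r2 * s * / m0 + mu1 * s * / m1).
  assert (HC : 0 <= C).
  { unfold C. apply Rplus_le_le_0_compat; repeat apply Rmult_le_pos; try lra;
    try (left; apply Rinv_0_lt_compat; lra). }
  set (M := (C + 1) / (1 - sp)).
  assert (HM : 0 < M) by (unfold M; apply Rdiv_lt_0_compat; lra).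
  assert (HspM : sp * M = M - (C + 1)) by (unfold M; field; lra).
  assert (Key : mu1 < M * Bf K g s (mu0 / Af K g s M)).
  { assert (HAM := Af_pos M ltac:(lra)).
    assert (Hy : 0 <= mu0 / Af K g s M) by (apply Rdiv_le_0_compat; lra).
    unfold Bf at 1.
    destruct (min_upto_attain (K 1%nat - 1) (fun k => g 1%nat k 1%nat / (g 1%nat k 0%nat * (mu0 / Af K g s M) + s))) as [k [Hk Ek]].
    rewrite Ek.
    unfold Af in *.
    destruct (min_upto_attain (K 0%nat - 1) (fun l => g 0%nat l 0%nat / (g 0%nat l 1%nat * M + s))) as [l [Hl El]].
    rewrite El in *.
    pose proof (hgd 1 k ltac:(lia) Hk) as G11. pose proof (hg 1 k 0 ltac:(lia) Hk ltac:(lia)) as G10.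
    pose proof (hgd 0 l ltac:(lia) Hl) as G00. pose proof (hg 0 l 1 ltac:(lia) Hl ltac:(lia)) as G01.
    set (a := g 1%nat k 0%nat / g 1%nat k 1%nat).
    set (b := g 0%nat l 1%nat / g 0%nat l 0%nat).
    set (e0 := / g 0%nat l 0%nat). set (e1 := / g 1%nat k 1%nat).
    assert (Ha : a <= r2) by (apply Hr2; lia).
    assert (Hb : b <= r1) by (apply Hr1; lia).
    assert (Ha0 : 0 <= a) by (apply Rdiv_le_0_compat; lra).
    assert (Hb0 : 0 <= b) by (apply Rdiv_le_0_compat; lra).
    assert (He0 : e0 <= / m0).
    { apply Rinv_le_contravar; [lra|]. apply (min_upto_le _ (fun l => g 0%nat l 0%nat)); lia. }
    assert (He1 : e1 <= / m1).
    { apply Rinv_le_contravar; [lra|]. apply (min_upto_le _ (fun l => g 1%nat l 1%nat)); lia. }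
    assert (He0p : 0 < e0) by (apply Rinv_0_lt_compat; lra).
    assert (He1p : 0 < e1) by (apply Rinv_0_lt_compat; lra).
    set (Dn := a * mu0 * (b * M + s * e0) + s * e1).
    assert (HDn : 0 < Dn).
    { unfold Dn. assert (0 <= a * mu0 * (b * M + s * e0)) by (apply Rmult_le_pos; [apply Rmult_le_pos; lra|nra]). nra. }
    assert (EQ : M * (g 1%nat k 1%nat / (g 1%nat k 0%nat * (mu0 / (g 0%nat l 0%nat / (g 0%nat l 1%nat * M + s))) + s))
                 = M / Dn).
    { assert (0 <= g 1%nat k 0%nat * mu0 * (g 0%nat l 1%nat * M + s)) by (apply Rmult_le_pos; [apply Rmult_le_pos; lra|nra]).
      unfold Dn, a, b, e0, e1. field. repeat split; apply Rgt_not_eq; nra. }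
    rewrite EQ.
    apply Rmult_lt_reg_r with Dn; [lra|].
    replace (M / Dn * Dn) with M by (field; lra).
    assert (E1 : mu1 * Dn = mu1 * mu0 * (a * b) * M + mu1 * mu0 * s * (a * e0) + mu1 * s * e1) by (unfold Dn; ring).
    assert (T1 : mu1 * mu0 * (a * b) * M <= mu1 * mu0 * (r2 * r1) * M).
    { apply Rmult_le_compat_r; [lra|]. apply Rmult_le_compat_l; [nra|]. apply Rmult_le_compat; lra. }
    assert (T2 : mu1 * mu0 * s * (a * e0) <= mu1 * mu0 * s * (r2 * / m0)).
    { apply Rmult_le_compat_l; [repeat apply Rmult_le_pos; lra|]. apply Rmult_le_compat; lra. }
    assert (T3 : mu1 * s * e1 <= mu1 * s * / m1).
    { apply Rmult_le_compat_l; [nra|lra]. }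
    assert (F1 : mu1 * mu0 * (r2 * r1) * M = sp * M) by (unfold sp; ring).
    assert (F2 : mu1 * mu0 * s * (r2 * / m0) + mu1 * s * / m1 = C) by (unfold C; ring).
    lra. }
  destruct (IVT_interv (fun x => x * Bf K g s (mu0 / Af K g s x) - mu1) 0 M) as [z [Hz Ez]].
  - intros a Ha. apply cp_minus; [|apply cp_const]. apply cp_mult; [apply cp_id|].
    pose proof (Af_pos a ltac:(lra)).
    apply (cp_comp (fun y => mu0 / Af K g s y) (Bf K g s)).
    + apply cp_div; [apply cp_const|apply Af_cont; lra|lra].
    + apply Bf_cont. apply Rdiv_le_0_compat; lra.
  - exact HM.
  - lra.
  - lra.
  - exists z; split; [lra|]. lra.
Qed.

Lemma suff k1 k2 (mu : nat -> R) :
  (k1 < K 0%nat)%nat ->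
  (forall k, (k < K 0%nat)%nat -> g 0%nat k 1%nat / g 0%nat k 0%nat <= g 0%nat k1 1%nat / g 0%nat k1 0%nat) ->
  (k2 < K 1%nat)%nat ->
  (forall k, (k < K 1%nat)%nat -> g 1%nat k 0%nat / g 1%nat k 1%nat <= g 1%nat k2 0%nat / g 1%nat k2 1%nat) ->
  nonneg_vec 2 mu ->
  mu 0%nat * mu 1%nat * (g 0%nat k1 1%nat / g 0%nat k1 0%nat) * (g 1%nat k2 0%nat / g 1%nat k2 1%nat) < 1 ->
  feasible 2 K g s mu.
Proof.
  intros Hk1 Hr1 Hk2 Hr2 Hmu Hsp.
  pose proof hs as Hs.
  pose proof (Hmu 0%nat ltac:(lia)) as Hm0. pose proof (Hmu 1%nat ltac:(lia)) as Hm1.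
  destruct (root_ex k1 k2 (mu 0%nat) (mu 1%nat) Hk1 Hr1 Hk2 Hr2 Hm0 Hm1 Hsp) as [x [Hx Ex]].
  pose proof (Af_pos x Hx) as HA.
  set (p0 := mu 0%nat / Af K g s x) in *.
  assert (Hp0 : 0 <= p0) by (unfold p0; apply Rdiv_le_0_compat; lra).
  exists (fun i => match i with 0%nat => p0 | _ => x end).
  split.
  - intros i Hi. destruct i; assumption.
  - intros i Hi. destruct i as [|[|]]; [| |lia].
    + rewrite sinr0_eq.
      rewrite (min_upto_ext _ _ (fun k => p0 * (g 0%nat k 0%nat / (g 0%nat k 1%nat * x + s)))).
      * rewrite min_upto_scale by lra. fold (Af K g s x). unfold p0. field. lra.
      * intros k Hk. pose proof (hg 0 k 1 ltac:(lia) Hk ltac:(lia)).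
        field. apply Rgt_not_eq. nra.
    + rewrite sinr1_eq.
      rewrite (min_upto_ext _ _ (fun k => x * (g 1%nat k 1%nat / (g 1%nat k 0%nat * p0 + s)))).
      * rewrite min_upto_scale by lra. fold (Bf K g s p0). symmetry; exact Ex.
      * intros k Hk. pose proof (hg 1 k 0 ltac:(lia) Hk ltac:(lia)).
        field. apply Rgt_not_eq. nra.
Qed.

Lemma nec k1 k2 (mu : nat -> R) :
  (k1 < K 0%nat)%nat -> (k2 < K 1%nat)%nat ->
  nonneg_vec 2 mu -> feasible 2 K g s mu ->
  mu 0%nat * mu 1%nat * (g 0%nat k1 1%nat / g 0%nat k1 0%nat) * (g 1%nat k2 0%nat / g 1%nat k2 1%nat) < 1.
Proof.
  intros Hk1 Hk2 Hmu [p [Hp Hq]].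
  pose proof hs as Hs.
  pose proof (Hmu 0%nat ltac:(lia)) as Hm0. pose proof (Hmu 1%nat ltac:(lia)) as Hm1.
  pose proof (Hp 0%nat ltac:(lia)) as Hp0. pose proof (Hp 1%nat ltac:(lia)) as Hp1.
  pose proof (Hq 0%nat ltac:(lia)) as E0. pose proof (Hq 1%nat ltac:(lia)) as E1.
  rewrite sinr0_eq in E0. rewrite sinr1_eq in E1.
  pose proof (min_upto_le (K 0%nat - 1) (fun k => g 0%nat k 0%nat * p 0%nat / (g 0%nat k 1%nat * p 1%nat + s)) k1 ltac:(lia)) as L0.
  pose proof (min_upto_le (K 1%nat - 1) (fun k => g 1%nat k 1%nat * p 1%nat / (g 1%nat k 0%nat * p 0%nat + s)) k2 ltac:(lia)) as L1.
  rewrite <- E0 in L0. rewrite <- E1 in L1. cbv beta in L0, L1.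
  pose proof (hgd 0 k1 ltac:(lia) ltac:(lia)) as G0. pose proof (hg 0 k1 1 ltac:(lia) ltac:(lia) ltac:(lia)) as H0.
  pose proof (hgd 1 k2 ltac:(lia) ltac:(lia)) as G1. pose proof (hg 1 k2 0 ltac:(lia) ltac:(lia) ltac:(lia)) as H1.
  set (X := g 0%nat k1 0%nat * p 0%nat / (g 0%nat k1 1%nat * p 1%nat + s)) in *.
  set (Y := g 1%nat k2 1%nat * p 1%nat / (g 1%nat k2 0%nat * p 0%nat + s)) in *.
  set (q := g 0%nat k1 1%nat / g 0%nat k1 0%nat * (g 1%nat k2 0%nat / g 1%nat k2 1%nat)).
  assert (Hq0 : 0 <= q).
  { unfold q. apply Rmult_le_pos; apply Rdiv_le_0_compat; lra. }
  assert (HXY : mu 0%nat * mu 1%nat <= X * Y) by (apply Rmult_le_compat; lra).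
  set (Q := (g 0%nat k1 1%nat * p 1%nat + s) * (g 1%nat k2 0%nat * p 0%nat + s)).
  set (P := p 0%nat * p 1%nat * g 0%nat k1 1%nat * g 1%nat k2 0%nat).
  assert (HQ : 0 < Q) by (unfold Q; apply Rmult_lt_0_compat; nra).
  assert (HPQ : P < Q).
  { unfold P, Q. assert (0 <= p 0%nat * p 1%nat * g 0%nat k1 1%nat * g 1%nat k2 0%nat) by
      (repeat apply Rmult_le_pos; lra).
    assert (0 <= s * (g 0%nat k1 1%nat * p 1%nat)) by (apply Rmult_le_pos; nra).
    assert (0 <= s * (g 1%nat k2 0%nat * p 0%nat)) by (apply Rmult_le_pos; nra).
    nra. }
  assert (EW : X * Y * q * Q = P).
  { unfold X, Y, q, Q, P. field. repeat split; apply Rgt_not_eq; nra. }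
  assert (HW : X * Y * q < 1).
  { apply Rmult_lt_reg_r with Q; [lra|]. rewrite EW. lra. }
  assert (mu 0%nat * mu 1%nat * q <= X * Y * q) by (apply Rmult_le_compat_r; lra).
  replace (mu 0%nat * mu 1%nat * (g 0%nat k1 1%nat / g 0%nat k1 0%nat) * (g 1%nat k2 0%nat / g 1%nat k2 1%nat))
    with (mu 0%nat * mu 1%nat * q) by (unfold q; ring).
  lra.
Qed.

End Two.

Lemma conv_iff P G0 H0 G1 H1 : 0 < G0 -> 0 < H0 -> 0 < G1 -> 0 < H1 ->
  (P * (H0 / G0) * (H1 / G1) < 1 <-> P < (G0 / H0) * (G1 / H1)).
Proof.
  intros. set (q := H0 / G0 * (H1 / G1)).
  assert (Hq : 0 < q) by (unfold q; apply Rmult_lt_0_compat; apply Rdiv_lt_0_compat; lra).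
  assert (E1 : P * (H0 / G0) * (H1 / G1) = P * q) by (unfold q; ring).
  assert (E2 : G0 / H0 * (G1 / H1) * q = 1) by (unfold q; field; lra).
  rewrite E1. split; intro HH.
  - apply Rmult_lt_reg_r with q; [lra|]. rewrite E2. lra.
  - rewrite <- E2. apply Rmult_lt_compat_r; lra.
Qed.

Theorem theorem4 :
  (* (i) N = 2 *)
  (forall (K : nat -> nat) (g : nat -> nat -> nat -> R) (sigma2 : R),
     valid_system 2 K g sigma2 ->
     convex_set 2 (infeasible 2 K g sigma2) /\
     ((forall i k j, (i < 2)%nat -> (k < K i)%nat -> (j < 2)%nat -> 0 < g i k j) ->
      forall k1 k2 : nat,
        (k1 < K 0%nat)%nat ->
        (forall k, (k < K 0%nat)%nat -> g 0%nat k 1%nat / g 0%nat k 0%nat <= g 0%nat k1 1%nat / g 0%nat k1 0%nat) ->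
        (k2 < K 1%nat)%nat ->
        (forall k, (k < K 1%nat)%nat -> g 1%nat k 0%nat / g 1%nat k 1%nat <= g 1%nat k2 0%nat / g 1%nat k2 1%nat) ->
        forall mu : nat -> R, nonneg_vec 2 mu ->
          (feasible 2 K g sigma2 mu <->
           mu 0%nat * mu 1%nat <
             (g 0%nat k1 0%nat / g 0%nat k1 1%nat) * (g 1%nat k2 1%nat / g 1%nat k2 0%nat)))) /\
  (* (ii) N = 3 counterexample *)
  (forall sigma2 : R, 0 < sigma2 ->
     ~ convex_set 3 (infeasible 3 K_ex g_ex sigma2)).
Proof.
  split; [|exact part2].
  intros K g s HV.
  pose proof (hK K g s HV 0 ltac:(lia)) as HK0. pose proof (hK K g s HV 1 ltac:(lia)) as HK1.
  split.
  - destruct (argmax_upto (K 0%nat - 1) (fun k => g 0%nat k 1%nat / g 0%nat k 0%nat)) as [k1 [Hk1 Hr1]].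
    destruct (argmax_upto (K 1%nat - 1) (fun k => g 1%nat k 0%nat / g 1%nat k 1%nat)) as [k2 [Hk2 Hr2]].
    assert (Hk1' : (k1 < K 0%nat)%nat) by lia. assert (Hk2' : (k2 < K 1%nat)%nat) by lia.
    assert (Hr1' : forall k, (k < K 0%nat)%nat -> g 0%nat k 1%nat / g 0%nat k 0%nat <= g 0%nat k1 1%nat / g 0%nat k1 0%nat)
      by (intros; apply Hr1; lia).
    assert (Hr2' : forall k, (k < K 1%nat)%nat -> g 1%nat k 0%nat / g 1%nat k 1%nat <= g 1%nat k2 0%nat / g 1%nat k2 1%nat)
      by (intros; apply Hr2; lia).
    set (r1 := g 0%nat k1 1%nat / g 0%nat k1 0%nat) in *.
    set (r2 := g 1%nat k2 0%nat / g 1%nat k2 1%nat) in *.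
    assert (Hr1p : 0 <= r1).
    { unfold r1. apply Rdiv_le_0_compat; [apply (hg K g s HV 0 k1 1); lia| apply (hgd K g s HV 0 k1); lia]. }
    assert (Hr2p : 0 <= r2).
    { unfold r2. apply Rdiv_le_0_compat; [apply (hg K g s HV 1 k2 0); lia| apply (hgd K g s HV 1 k2); lia]. }
    assert (Inf : forall v, infeasible 2 K g s v -> 1 <= v 0%nat * v 1%nat * (r1 * r2)).
    { intros v [Hv Hnf]. apply Rnot_lt_le. intro Hlt. apply Hnf.
      apply (suff K g s HV k1 k2 v Hk1' Hr1' Hk2' Hr2' Hv). fold r1 r2.
      replace (v 0%nat * v 1%nat * r1 * r2) with (v 0%nat * v 1%nat * (r1 * r2)) by ring. exact Hlt. }
    intros x y t Hx Hy Ht z Hz.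
    pose proof (Inf x Hx) as Ix. pose proof (Inf y Hy) as Iy.
    destruct Hx as [Hx _]. destruct Hy as [Hy _].
    pose proof (Hx 0%nat ltac:(lia)). pose proof (Hx 1%nat ltac:(lia)).
    pose proof (Hy 0%nat ltac:(lia)). pose proof (Hy 1%nat ltac:(lia)).
    assert (Hzn : nonneg_vec 2 z).
    { intros i Hi. rewrite (Hz i Hi). pose proof (Hx i Hi). pose proof (Hy i Hi).
      apply Rplus_le_le_0_compat; apply Rmult_le_pos; lra. }
    split; [exact Hzn|]. intro Fz.
    pose proof (nec K g s HV k1 k2 z Hk1' Hk2' Hzn Fz) as Nz. fold r1 r2 in Nz.
    rewrite (Hz 0%nat ltac:(lia)), (Hz 1%nat ltac:(lia)) in Nz.
    pose proof (hyper_convex (x 0%nat) (x 1%nat) (y 0%nat) (y 1%nat) (r1 * r2) t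
                  ltac:(lra) ltac:(lra) ltac:(lra) ltac:(lra) ltac:(apply Rmult_le_pos; lra) Ix Iy Ht) as HC.
    replace ((t * x 0%nat + (1 - t) * y 0%nat) * (t * x 1%nat + (1 - t) * y 1%nat) * r1 * r2)
      with ((t * x 0%nat + (1 - t) * y 0%nat) * (t * x 1%nat + (1 - t) * y 1%nat) * (r1 * r2)) in Nz by ring.
    lra.
  - intros Hpos k1 k2 Hk1 Hr1 Hk2 Hr2 mu Hmu.
    pose proof (Hmu 0%nat ltac:(lia)). pose proof (Hmu 1%nat ltac:(lia)).
    rewrite <- (conv_iff (mu 0%nat * mu 1%nat)) by (apply Hpos; lia).
    split.
    + intro F. exact (nec K g s HV k1 k2 mu Hk1 Hk2 Hmu F).
    + intro HH. exact (suff K g s HV k1 k2 mu Hk1 Hr1 Hk2 Hr2 Hmu HH).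
Qed.
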